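(* Let $B$ be a crystal and $N\ge2$. For $i\in\{2,\dots,N-1\}$ the automorphism $T_i$ of $B^{\otimes N}$ by which the Bender–Knuth generator $\mathbf t_i$ of the cactus group $C_N$ acts satisfies $$T_i=\sigma_{1,1,i}\circ\sigma_{1,i,i+1}.$$ The same formula holds for $i=1$ if $\sigma_{1,1,1}$ is defined to be the identity, i.e. $T_1=\sigma_{1,1,2}$.
   Context: Let $\mathfrak g$ be a complex semisimple Lie algebra; a crystal is a normal $\mathfrak g$-crystal whose components are Kashiwara crystals $B_\lambda$ of irreducible $U_q(\mathfrak g)$-modules, with the tensor product $\tilde e_i(a\otimes b)=a\otimes\tilde e_ib$ if $\varepsilon_i(b)>\varphi_i(a)$, else $\tilde e_ia\otimes b$; $\tilde f_i(a\otimes b)=a\otimes\tilde f_ib$ if $\varepsilon_i(b)\ge\varphi_i(a)$, else $\tilde f_ia\otimes b$. For crystals $A,B$ the Henriques–Kamnitzer commutor is the crystal isomorphism $\sigma_{A,B}:A\otimes B\to B\otimes A$, $a\otimes b\mapsto\xi_{B\otimes A}(\xi_B(b)\otimes\xi_A(a))$, where $\xi$ is the Schützenberger involution (on each component $B_\lambda$ the unique map sending the highest weight element to the lowest one with $\xi\tilde f_i=\tilde e_{\theta(i)}\xi$, $\xi\tilde e_i=\tilde f_{\theta(i)}\xi$, $w_0\alpha_i=-\alpha_{\theta(i)}$). For $1\le p\le r<q\le N$, $\sigma_{p,r,q}=1_{B^{\otimes(p-1)}}\otimes\sigma_{B^{\otimes(r-p+1)},B^{\otimes(q-r)}}\otimes1_{B^{\otimes(N-q)}}$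 on $B^{\otimes N}$. Define $s_{p,p}=1$, $s_{p,p+1}=\sigma_{p,p,p+1}$, $s_{p,q}=\sigma_{p,p,q}\circ s_{p+1,q}$ ($q-p>1$). The cactus group $C_N$ has generators $\mathbf s_{p,q}$ ($1\le p<q\le N$) acting on $B^{\otimes N}$ by $s_{p,q}$ (Henriques–Kamnitzer); its Bender–Knuth generators (Chmutov–Glick–Pylyavskyy) are $\mathbf t_1=\mathbf s_{1,2}$, $\mathbf t_2=\mathbf s_{1,2}\mathbf s_{1,3}\mathbf s_{1,2}$, $\mathbf t_i=\mathbf s_{1,i}\mathbf s_{1,i+1}\mathbf s_{1,i}\mathbf s_{1,i-1}$ ($i>2$), so that $T_1=s_{1,2}$, $T_2=s_{1,2}\circ s_{1,3}\circ s_{1,2}$, $T_i=s_{1,i}\circ s_{1,i+1}\circ s_{1,i}\circ s_{1,i-1}$ for $i>2$. *)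

(* Defs.v *)
From Stdlib Require Import ClassicalEpsilon Relation_Operators.
From mathcomp Require Import all_boot.

Set Implicit Arguments.
Unset Strict Implicit.
Unset Printing Implicit Defensive.

(* Crystals (index set I of simple roots).  e_i, f_i are partial maps   *)
(* (None = 0), eps_i, phi_i the usual nat-valued functions.             *)
Record crystal (I : Type) := Crystal {
  carrier :> Type;
  ce : I -> carrier -> option carrier;
  cf : I -> carrier -> option carrier;
  ceps : I -> carrier -> nat;
  cphi : I -> carrier -> nat }.
Arguments ce {I} c i _.
Arguments cf {I} c i _.
Arguments ceps {I} c i _.
Arguments cphi {I} c i _.

Section CrystalDefs.
Variable I : Type.

Definition seminormal (C : crystal I) : Prop :=
  (forall i (x y : C), ce C i x = Some y <-> cf C i y = Some x) /\
  (forall i (x : C), ce C i x = None <-> ceps C i x = 0) /\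
  (forall i (x y : C), ce C i x = Some y -> ceps C i y = (ceps C i x).-1) /\
  (forall i (x : C), cf C i x = None <-> cphi C i x = 0) /\
  (forall i (x y : C), cf C i x = Some y -> cphi C i y = (cphi C i x).-1).

Definition conn (C : crystal I) : C -> C -> Prop :=
  clos_refl_sym_trans C (fun a b => exists i, ce C i a = Some b).

Definition highest (C : crystal I) (x : C) : Prop := forall i, ce C i x = None.

(* tensor product with the convention of the paper:
   e_i(a (x) b) = a (x) e_i b if eps_i(b) > phi_i(a), else e_i a (x) b;
   f_i(a (x) b) = a (x) f_i b if eps_i(b) >= phi_i(a), else f_i a (x) b. *)
Definition tensor (C D : crystal I) : crystal I :=
  @Crystal I (C * D)%type
    (fun i ab => if cphi C i ab.1 < ceps D i ab.2
                 then omap (fun b' => (ab.1, b')) (ce D i ab.2)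
                 else omap (fun a' => (a', ab.2)) (ce C i ab.1))
    (fun i ab => if cphi C i ab.1 <= ceps D i ab.2
                 then omap (fun b' => (ab.1, b')) (cf D i ab.2)
                 else omap (fun a' => (a', ab.2)) (cf C i ab.1))
    (fun i ab => ceps C i ab.1 + (ceps D i ab.2 - cphi C i ab.1))
    (fun i ab => cphi D i ab.2 + (cphi C i ab.1 - ceps D i ab.2)).

Definition component_iso (C D : crystal I) (g : C -> D) (d : D) : Prop :=
  injective g /\
  (forall i x, omap g (ce C i x) = ce D i (g x)) /\
  (forall i x, omap g (cf C i x) = cf D i (g x)) /\
  (forall i x, ceps D i (g x) = ceps C i x) /\
  (forall i x, cphi D i (g x) = cphi C i x) /\
  (forall y, conn d y <-> exists x, g x = y).

Definition normal_in (L : Type) (Bl : L -> crystal I) (C : crystal I) : Prop :=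
  forall c : C, exists lam (g : Bl lam -> C), component_iso g c.

Variable theta : I -> I.

(* g is a Schuetzenberger map on the component of c:
   xi f_i = e_theta(i) xi, xi e_i = f_theta(i) xi, and xi preserves the
   component (hence sends its highest weight element to its lowest one) *)
Definition schutz_at (C : crystal I) (c : C) (g : C -> C) : Prop :=
  forall x, conn c x ->
    (forall i, omap g (cf C i x) = ce C (theta i) (g x)) /\
    (forall i, omap g (ce C i x) = cf C (theta i) (g x)) /\
    conn x (g x).

(* the Schuetzenberger involution, defined componentwise as the (unique)
   such map *)
Definition xi (C : crystal I) (c : C) : C :=
  epsilon (inhabits (fun x : C => x)) (schutz_at c) c.

(* Axioms satisfied by the family {B_lambda} of Kashiwara crystals of the
   irreducible U_q(g)-modules. *)
Definition kashiwara_family (L : Type) (Bl : L -> crystal I) : Prop :=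
  (forall lam, seminormal (Bl lam)) /\
  (forall lam (x y : Bl lam), conn x y) /\
  (forall lam, exists h : Bl lam, highest h /\ forall x, highest x -> x = h) /\
  (forall lam, exists g, forall x : Bl lam, schutz_at x g) /\
  (forall lam mu, normal_in Bl (tensor (Bl lam) (Bl mu))).

(* Tensor powers B^{(x)k}, realised on words (seq B) of length k, with  *)
(* the bracketing B (x) (B (x) ( ... )).  The crystal on seq B is the    *)
(* direct sum of all tensor powers; its components lie in a fixed length *)
(* so xi on it restricts to xi on each B^{(x)k}.                         *)
Variable B : crystal I.

Fixpoint weps (i : I) (w : seq B) : nat :=
  if w is b :: w' then ceps B i b + (weps i w' - cphi B i b) else 0.
Fixpoint wphi (i : I) (w : seq B) : nat :=
  if w is b :: w' then wphi i w' + (cphi B i b - weps i w') else 0.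
Fixpoint we (i : I) (w : seq B) : option (seq B) :=
  if w is b :: w' then
    if cphi B i b < weps i w' then omap (cons b) (we i w')
    else omap (fun b' => b' :: w') (ce B i b)
  else None.
Fixpoint wf (i : I) (w : seq B) : option (seq B) :=
  if w is b :: w' then
    if cphi B i b <= weps i w' then omap (cons b) (wf i w')
    else omap (fun b' => b' :: w') (cf B i b)
  else None.

Definition words : crystal I := @Crystal I (seq B) we wf weps wphi.

(* Henriques--Kamnitzer commutor sigma_{A,B'} for A = B^{(x)m}, B' = B^{(x)n}:
   a (x) b |-> xi_{B' (x) A}(xi_{B'} b (x) xi_A a), read back as a word *)
Definition commutor (u v : seq B) : seq B :=
  let p : seq B * seq B :=
    @xi (tensor words words) (@xi words v, @xi words u) in p.1 ++ p.2.

(* sigma_{p,r,q} on B^{(x)N} (1-based positions) *)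
Definition sigma (p r q : nat) (w : seq B) : seq B :=
  take p.-1 w ++
  commutor (take (r - p.-1) (drop p.-1 w)) (take (q - r) (drop r w)) ++
  drop q w.

Fixpoint s_aux (d p : nat) (w : seq B) : seq B :=
  if d is d'.+1 then sigma p p (p + d) (s_aux d' p.+1 w) else w.
Definition s (p q : nat) : seq B -> seq B := s_aux (q - p) p.

Definition T (i : nat) : seq B -> seq B :=
  if i == 1 then s 1 2
  else if i == 2 then s 1 2 \o s 1 3 \o s 1 2
  else s 1 i \o s 1 i.+1 \o s 1 i \o s 1 i.-1.

End CrystalDefs.

Arguments xi {I} theta C c.
Arguments sigma {I} theta B p r q w.
Arguments s {I} theta B p q _.
Arguments T {I} theta B i _.
Arguments kashiwara_family {I} theta {L} Bl.
Arguments normal_in {I L} Bl C.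

(* Main.v *)
Require Import Defs.
From Stdlib Require Import ClassicalEpsilon Relation_Operators Operators_Properties.
From mathcomp Require Import all_boot zify.

Set Implicit Arguments.
Unset Strict Implicit.
Unset Printing Implicit Defensive.



Section Gen.
Variable I : Type.

Lemma conn_refl (C : crystal I) (x : C) : conn x x.
Proof. exact: rst_refl. Qed.
Lemma conn_sym (C : crystal I) (x y : C) : conn x y -> conn y x.
Proof. exact: rst_sym. Qed.
Lemma conn_trans (C : crystal I) (x y z : C) : conn x y -> conn y z -> conn x z.
Proof. exact: rst_trans. Qed.
Lemma conn_edge (C : crystal I) i (x y : C) : ce C i x = Some y -> conn x y.
Proof. by move=> h; apply: rst_step; exists i. Qed.

Lemma conn_map_inv (C D : crystal I) (h : C -> D) (Q : C -> Prop) :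
  (forall i x y, ce C i x = Some y -> (Q x <-> Q y)) ->
  (forall i x y, Q x -> ce C i x = Some y -> conn (h x) (h y)) ->
  forall x y, Q x -> conn x y -> conn (h x) (h y).
Proof.
move=> HQ HE x y Qx cxy.
suff: (Q x <-> Q y) /\ (Q x -> conn (h x) (h y)) by case=> _; apply.
elim: cxy {Qx} => {x y} [x y [i e]| x | x y _ [IH1 IH2] | x y z _ [IH1 IH2] _ [IH3 IH4]].
- split; first exact: HQ e. by move=> Qx; apply: HE e.
- by split=> // _; apply: conn_refl.
- split; first by split=> ?; apply/IH1.
  by move=> Qy; apply: conn_sym; apply: IH2; apply/IH1.
- split; first by split=> ?; [apply/IH3/IH1|apply/IH1/IH3].
  move=> Qx; apply: conn_trans (IH2 Qx) (IH4 _); exact/IH1.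
Qed.

Lemma conn_map (C D : crystal I) (h : C -> D) :
  (forall i x, omap h (ce C i x) = ce D i (h x)) ->
  forall x y, conn x y -> conn (h x) (h y).
Proof.
move=> Hh x y; apply: (@conn_map_inv _ _ h (fun _ => True)) => // i a b _ e.
by apply: (@conn_edge _ i); rewrite -Hh e.
Qed.

Lemma agree (C : crystal I) (c : C) (k1 k2 : C -> C)
  (E F : I -> C -> option C) :
  (forall i x y, conn c x -> ce C i y = Some x -> cf C i x = Some y) ->
  (forall i x, conn c x -> omap k1 (ce C i x) = E i (k1 x) /\
                           omap k1 (cf C i x) = F i (k1 x)) ->
  (forall i x, conn c x -> omap k2 (ce C i x) = E i (k2 x) /\
                           omap k2 (cf C i x) = F i (k2 x)) ->
  forall x0, conn c x0 -> k1 x0 = k2 x0 ->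
  forall y, conn c y -> k1 y = k2 y.
Proof.
move=> Hs H1 H2 x0 cx0 e0 y cy.
have: clos_refl_sym_trans_1n C (fun a b => exists i, ce C i a = Some b) x0 y.
  apply/clos_rst_rst1n_iff; exact: conn_trans (conn_sym cx0) cy.
move=> r; elim: r cx0 e0 {cy} => {x0 y} // x y z [[i e]|[i e]] _ IH cx ex.
- have cy : conn c y by apply: conn_trans cx (conn_edge e).
  apply: IH => //.
  have [a1 _] := H1 i x cx; have [a2 _] := H2 i x cx.
  rewrite e /= ex in a1 a2; rewrite -a2 in a1; by case: a1.
- have cy : conn c y by apply: conn_trans cx (conn_sym (conn_edge e)).
  apply: IH => //.
  have e' := Hs i x y cx e.
  have [_ a1] := H1 i x cx; have [_ a2] := H2 i x cx.
  rewrite e' /= ex in a1 a2; rewrite -a2 in a1; by case: a1.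
Qed.

End Gen.



Section Iso.
Variables (I : Type) (theta : I -> I) (L : Type) (Bl : L -> crystal I).
Hypothesis thth : forall i, theta (theta i) = i.
Hypothesis semiBl : forall lam, seminormal (Bl lam).
Hypothesis highBl : forall lam, exists h : Bl lam, highest h /\ forall x, highest x -> x = h.
Hypothesis schBl : forall lam, exists g, forall x : Bl lam, schutz_at theta x g.

Variables (C : crystal I) (lam : L) (h : Bl lam -> C) (c : C).
Hypothesis iso : component_iso h c.

Lemma omap_o (X Y Z : Type) (f : X -> Y) (g : Y -> Z) o :
  omap (fun y => g (f y)) o = omap g (omap f o).
Proof. by case: o. Qed.

Let inj : injective h. Proof. by case: iso. Qed.
Let he i x : omap h (ce _ i x) = ce C i (h x). Proof. by case: iso => _ []. Qed.
Let hf i x : omap h (cf _ i x) = cf C i (h x). Proof. by case: iso => _ [] _ []. Qed.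
Let heps i x : ceps C i (h x) = ceps _ i x. Proof. by case: iso => _ [] _ [] _ []. Qed.
Let hphi i x : cphi C i (h x) = cphi _ i x. Proof. by case: iso => _ [] _ [] _ [] _ []. Qed.
Let himg y : conn c y <-> exists x, h x = y. Proof. by case: iso => _ [] _ [] _ [] _ []. Qed.

Lemma iso_inv y : conn c y -> exists x, h x = y. Proof. by move/himg. Qed.
Lemma iso_conn x : conn c (h x). Proof. by apply/himg; exists x. Qed.

Lemma iso_at y : conn c y -> component_iso h y.
Proof.
move=> cy; case: iso => [? [? [? [? [? H]]]]]; do 5 (split=> //).
move=> z; split.
- by move=> cz; apply/H; apply: conn_trans cy cz.
- by move/H=> cz; apply: conn_trans (conn_sym cy) cz.
Qed.

Lemma semi1 i x y : conn c y -> ce C i y = Some x -> cf C i x = Some y.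
Proof.
move=> /iso_inv [y0 <-]; rewrite -he.
case E: (ce _ i y0) => [x1|] //= [<-].
have [S1 _] := semiBl lam; have := (S1 i y0 x1).1 E.
by rewrite -hf => ->.
Qed.

Lemma semi1' i x y : conn c y -> cf C i y = Some x -> ce C i x = Some y.
Proof.
move=> /iso_inv [y0 <-]; rewrite -hf.
case E: (cf _ i y0) => [x1|] //= [<-].
have [S1 _] := semiBl lam; have := (S1 i x1 y0).2 E.
by rewrite -he => ->.
Qed.

Lemma semiHs i x y : conn c x -> ce C i y = Some x -> cf C i x = Some y.
Proof.
move=> cx e; have cy : conn c y by exact: conn_trans cx (conn_sym (conn_edge e)).
exact: semi1 cy e.
Qed.

Lemma semi_e0 i x : conn c x -> (ce C i x = None <-> ceps C i x = 0).
Proof.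
move=> /iso_inv [x0 <-]; rewrite -he heps.
have [_ [S2 _]] := semiBl lam; rewrite -S2.
by case: (ce _ i x0).
Qed.

Lemma semi_f0 i x : conn c x -> (cf C i x = None <-> cphi C i x = 0).
Proof.
move=> /iso_inv [x0 <-]; rewrite -hf hphi.
have [_ [_ [_ [S4 _]]]] := semiBl lam; rewrite -S4.
by case: (cf _ i x0).
Qed.

Lemma semi_e1 i x y : conn c x -> ce C i x = Some y -> ceps C i y = (ceps C i x).-1.
Proof.
move=> /iso_inv [x0 <-]; rewrite -he heps.
case E: (ce _ i x0) => [y0|] //= [<-]; rewrite heps.
have [_ [_ [S3 _]]] := semiBl lam; exact: S3 E.
Qed.

Lemma semi_f1 i x y : conn c x -> cf C i x = Some y -> cphi C i y = (cphi C i x).-1.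
Proof.
move=> /iso_inv [x0 <-]; rewrite -hf hphi.
case E: (cf _ i x0) => [y0|] //= [<-]; rewrite hphi.
have [_ [_ [_ [_ S5]]]] := semiBl lam; exact: S5 E.
Qed.

Lemma exist_schutz : exists g, schutz_at theta c g.
Proof.
have [x0 hx0] := iso_inv (conn_refl c).
have [gl Hgl] := schBl lam.
pose pre (y : C) : Bl lam := epsilon (inhabits x0) (fun x => h x = y).
have preK x : pre (h x) = x.
  apply: inj; rewrite /pre; apply: (epsilon_spec (inhabits x0) (fun z => h z = h x)).
  by exists x.
exists (fun y => h (gl (pre y))) => y /iso_inv [x <-].
have [A1 [A2 A3]] := Hgl x x (conn_refl _).
split; [|split].
- move=> i; rewrite -hf preK -he -(A1 i).
  by case: (cf _ i x) => //= z; rewrite preK.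
- move=> i; rewrite -he preK -hf -(A2 i).
  by case: (ce _ i x) => //= z; rewrite preK.
- by rewrite preK; apply: conn_map A3 => i z; rewrite he.
Qed.


Section Sch.
Variable hl : Bl lam.
Hypothesis hlh : highest hl.
Hypothesis hlu : forall x, highest x -> x = hl.

Let H := h hl.
Lemma cH : conn c H. Proof. exact: iso_conn. Qed.
Lemma highH y : conn c y -> (forall i, ce C i y = None) -> y = H.
Proof.
move=> /iso_inv [x <-] hy; congr h; apply: hlu => i.
by have := hy i; rewrite -he; case: (ce _ i x).
Qed.
Lemma highH' i : ce C i H = None.
Proof. by rewrite /H -he hlh. Qed.

Lemma schutz_lowhigh g y : schutz_at theta c g -> conn c y ->
  (forall i, cf C i y = None) -> g y = H.
Proof.
move=> Hg cy hy; have [A1 [A2 A3]] := Hg y cy.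
apply: highH; first exact: conn_trans cy A3.
by move=> i; rewrite -(thth i) -A1 hy.
Qed.

Lemma schutz_lowH g i : schutz_at theta c g -> cf C (theta i) (g H) = None.
Proof. by move=> Hg; have [_ [A2 _]] := Hg H cH; rewrite -A2 highH'. Qed.

Lemma schutz_invol g x : schutz_at theta c g -> conn c x -> g (g x) = x.
Proof.
move=> Hg; apply: (@agree _ C c (fun y => g (g y)) id (ce C) (cf C)).
- exact: semiHs.
- move=> i y cy; have [A1 [A2 A3]] := Hg y cy.
  have cgy : conn c (g y) := conn_trans cy A3.
  have [B1 [B2 B3]] := Hg _ cgy.
  split.
  + by rewrite omap_o A2 B1 thth.
  + by rewrite omap_o A1 B2 thth.
- by move=> i y _; rewrite !omap_id.
- exact: cH.
- have cgH : conn c (g H) by have [_ [_ A3]] := Hg H cH; apply: conn_trans cH A3.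
  apply: (schutz_lowhigh Hg cgH) => i; rewrite -(thth i); exact: schutz_lowH.
Qed.

Lemma schutz_uniq g1 g2 x : schutz_at theta c g1 -> schutz_at theta c g2 ->
  conn c x -> g1 x = g2 x.
Proof.
move=> H1 H2; apply: (@agree _ C c g1 g2 (fun i => cf C (theta i)) (fun i => ce C (theta i))).
- exact: semiHs.
- by move=> i y cy; have [A1 [A2 _]] := H1 y cy.
- by move=> i y cy; have [A1 [A2 _]] := H2 y cy.
- exact: cH.
- have cg2H : conn c (g2 H) by have [_ [_ A3]] := H2 H cH; apply: conn_trans cH A3.
  have e : g1 (g2 H) = H.
    apply: (schutz_lowhigh H1 cg2H) => i; rewrite -(thth i); exact: schutz_lowH.
  by rewrite -{1}e (schutz_invol H1 cg2H).
Qed.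
End Sch.

Lemma schutz_uniq' g1 g2 x : schutz_at theta c g1 -> schutz_at theta c g2 ->
  conn c x -> g1 x = g2 x.
Proof. have [hl [? ?]] := highBl lam; exact: schutz_uniq. Qed.
Lemma schutz_invol' g x : schutz_at theta c g -> conn c x -> g (g x) = x.
Proof. have [hl [? ?]] := highBl lam; exact: schutz_invol. Qed.

End Iso.



Section GlobX.
Variables (I : Type) (theta : I -> I) (L : Type) (Bl : L -> crystal I).
Hypothesis thth : forall i, theta (theta i) = i.
Hypothesis semiBl : forall lam, seminormal (Bl lam).
Hypothesis highBl : forall lam, exists h : Bl lam, highest h /\ forall x, highest x -> x = h.
Hypothesis schBl : forall lam, exists g, forall x : Bl lam, schutz_at theta x g.

Variables (C : crystal I) (P : C -> Prop).
Hypothesis isoP : forall x, P x -> exists lam (h : Bl lam -> C), component_iso h x.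
Hypothesis Pconn : forall x y, P x -> conn x y -> P y.

Local Notation X := (xi theta C).

Lemma schutz_at_sub (c y : C) g : conn c y -> schutz_at theta c g -> schutz_at theta y g.
Proof. by move=> cy Hg z cz; apply: Hg; apply: conn_trans cy cz. Qed.

Lemma Xgood c : P c -> schutz_at theta c (epsilon (inhabits (fun x : C => x)) (schutz_at theta c)).
Proof.
move=> Pc; apply: epsilon_spec.
have [lam [h iso]] := isoP Pc; exact (exist_schutz schBl iso).
Qed.

Lemma Xagree c g y : P c -> schutz_at theta c g -> conn c y -> X y = g y.
Proof.
move=> Pc Hg cy; have Py := Pconn Pc cy.
have [lam [h iso]] := isoP Py.
rewrite /xi; apply: (schutz_uniq' thth semiBl highBl iso (Xgood Py)).
- exact: schutz_at_sub cy Hg.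
- exact: conn_refl.
Qed.

Lemma Xsch c : P c -> schutz_at theta c X.
Proof.
move=> Pc; have Hg := Xgood Pc; set g := epsilon _ _ in Hg.
move=> y cy; have [A1 [A2 A3]] := Hg y cy.
have ag z : conn y z -> X z = g z.
  by move=> yz; apply: (Xagree Pc Hg); apply: conn_trans cy yz.
split; [|split].
- move=> i; rewrite (ag y (conn_refl _)) -A1.
  case E: (cf C i y) => [z|] //=; rewrite ag //.
  apply: conn_sym; apply: (@conn_edge _ _ i).
  have [lam [h iso]] := isoP (Pconn Pc cy).
  exact (semi1' semiBl iso (conn_refl _) E).
- move=> i; rewrite (ag y (conn_refl _)) -A2.
  case E: (ce C i y) => [z|] /=; last done.
  by rewrite (ag z (conn_edge E)).
- by rewrite (ag y (conn_refl _)).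
Qed.

Lemma Xspec x : P x ->
  (forall i, omap X (cf C i x) = ce C (theta i) (X x)) /\
  (forall i, omap X (ce C i x) = cf C (theta i) (X x)) /\ conn x (X x).
Proof. by move=> Px; apply: (Xsch Px); apply: conn_refl. Qed.

Lemma Xinv x : P x -> X (X x) = x.
Proof.
move=> Px; have [lam [h iso]] := isoP Px.
exact: (schutz_invol' thth semiBl highBl iso (Xsch Px) (conn_refl _)).
Qed.

Lemma PX x : P x -> P (X x).
Proof. by move=> Px; have [_ [_ H]] := Xspec Px; apply: (Pconn Px H). Qed.

Lemma X_eps i x : P x -> ceps C i x = cphi C (theta i) (X x).
Proof.
move=> Px; move Hn: (ceps C i x) => n; elim: n x Px Hn => [|n IH] x Px Hn.
- have [lam [h iso]] := isoP Px.
  have := (semi_e0 semiBl iso i (conn_refl _)).2 Hn.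
  have [_ [A2 _]] := Xspec Px; move=> E; have := A2 i; rewrite E /= => E'.
  have [lam' [h' iso']] := isoP (PX Px).
  by apply/esym/(semi_f0 semiBl iso' _ (conn_refl _)); rewrite -E'.
- have [lam [h iso]] := isoP Px.
  case E: (ce C i x) => [y|].
  + have Ey := semi_e1 semiBl iso (conn_refl _) E; rewrite Hn /= in Ey.
    have Py : P y by apply: Pconn Px (conn_edge E).
    have := IH y Py Ey.
    have [_ [A2 _]] := Xspec Px; have := A2 i; rewrite E /= => E'.
    have [lam' [h' iso']] := isoP (PX Px).
    have := semi_f1 semiBl iso' (conn_refl _) (esym E') => ->.
    have : cphi C (theta i) (X x) <> 0.
      by move/(semi_f0 semiBl iso' _ (conn_refl _)); rewrite -E'.
    by case: (cphi C (theta i) (X x)) => //= m _ <-.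
  + by have := (semi_e0 semiBl iso i (conn_refl _)).1 E; rewrite Hn.
Qed.

Lemma X_phi i x : P x -> cphi C i x = ceps C (theta i) (X x).
Proof.
move=> Px; move Hn: (cphi C i x) => n; elim: n x Px Hn => [|n IH] x Px Hn.
- have [lam [h iso]] := isoP Px.
  have := (semi_f0 semiBl iso i (conn_refl _)).2 Hn.
  have [A1 _] := Xspec Px; move=> E; have := A1 i; rewrite E /= => E'.
  have [lam' [h' iso']] := isoP (PX Px).
  by apply/esym/(semi_e0 semiBl iso' _ (conn_refl _)); rewrite -E'.
- have [lam [h iso]] := isoP Px.
  case E: (cf C i x) => [y|].
  + have Ey := semi_f1 semiBl iso (conn_refl _) E; rewrite Hn /= in Ey.
    have Py : P y.
      apply: Pconn Px _; apply: conn_sym; apply: (@conn_edge _ _ i).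
      exact (semi1' semiBl iso (conn_refl _) E).
    have := IH y Py Ey.
    have [A1 _] := Xspec Px; have := A1 i; rewrite E /= => E'.
    have [lam' [h' iso']] := isoP (PX Px).
    have := semi_e1 semiBl iso' (conn_refl _) (esym E') => ->.
    have : ceps C (theta i) (X x) <> 0.
      by move/(semi_e0 semiBl iso' _ (conn_refl _)); rewrite -E'.
    by case: (ceps C (theta i) (X x)) => //= m _ <-.
  + by have := (semi_f0 semiBl iso i (conn_refl _)).1 E; rewrite Hn.
Qed.

End GlobX.



Section Words.
Variables (I : Type) (B : crystal I).
Implicit Types (u v w : seq B).
Hypothesis HBe : forall i b, ce B i b = None <-> ceps B i b = 0.
Hypothesis HBf : forall i b, cf B i b = None <-> cphi B i b = 0.

Lemma we_None i v : we i v = None <-> weps i v = 0.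
Proof.
elim: v => [|b v IH] //=; case: ifP => H.
- case E: (we i v) => [v'|] /=; last by move/IH: E; lia.
  split=> // /eqP; rewrite addn_eq0 subn_eq0 => /andP [_]; lia.
- case E: (ce B i b) => [b'|] /=.
  + split=> // /eqP; rewrite addn_eq0 => /andP [/eqP h _].
    by move/HBe: h; rewrite E.
  + move/HBe: E => ->; split=> // _; lia.
Qed.

Lemma wf_None i v : wf i v = None <-> wphi i v = 0.
Proof.
elim: v => [|b v IH] //=; case: ifP => H.
- case E: (wf i v) => [v'|] /=.
  + split=> // /eqP; rewrite addn_eq0 => /andP [/eqP h _].
    by move/IH: h; rewrite E.
  + move/IH: E => ->; split=> // _; lia.
- case E: (cf B i b) => [b'|] /=.
  + split=> // /eqP; rewrite addn_eq0 => /andP [_ /eqP]; lia.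
  + move/HBf: E => E; split=> // _; lia.
Qed.

Lemma size_we i u v : we i u = Some v -> size v = size u.
Proof.
elim: u v => [|b u IH] v //=; case: ifP => _.
- by case E: (we i u) => [u'|] //= [<-] /=; rewrite (IH _ E).
- by case: (ce B i b) => [b'|] //= [<-].
Qed.

Lemma size_wf i u v : wf i u = Some v -> size v = size u.
Proof.
elim: u v => [|b u IH] v //=; case: ifP => _.
- by case E: (wf i u) => [u'|] //= [<-] /=; rewrite (IH _ E).
- by case: (cf B i b) => [b'|] //= [<-].
Qed.

Lemma weps_cat i u v : weps i (u ++ v) = weps i u + (weps i v - wphi i u).
Proof. elim: u => [|b u IH] /=; [lia|]. rewrite IH; lia. Qed.

Lemma wphi_cat i u v : wphi i (u ++ v) = wphi i v + (wphi i u - weps i v).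
Proof. elim: u => [|b u IH] /=; [lia|]. rewrite IH weps_cat; lia. Qed.

Lemma we_cat i u v : we i (u ++ v) =
  if wphi i u < weps i v then omap (fun v' => u ++ v') (we i v)
  else omap (fun u' => u' ++ v) (we i u).
Proof.
elim: u => [|b u IH] /=.
  case: ifP => h; first by case: (we i v).
  by apply/we_None; lia.
rewrite IH weps_cat.
set pb := cphi B i b; set eu := weps i u; set pu := wphi i u; set ev := weps i v.
have [D|D] := ltnP (pu + (pb - eu)) ev.
- have -> : pb < eu + (ev - pu) by lia.
  have -> : pu < ev by lia.
  by case: (we i v).
- have [E|E] := ltnP pb eu.
  + have -> : pb < eu + (ev - pu) by lia.
    have -> : pu < ev = false by apply/negbTE; lia.
    by case: (we i u).
  + have -> : pb < eu + (ev - pu) = false by apply/negbTE; lia.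
    by case: (ce B i b).
Qed.

Lemma wf_cat i u v : wf i (u ++ v) =
  if wphi i u <= weps i v then omap (fun v' => u ++ v') (wf i v)
  else omap (fun u' => u' ++ v) (wf i u).
Proof.
elim: u => [|b u IH] /=.
  by case: (wf i v).
rewrite IH weps_cat.
set pb := cphi B i b; set eu := weps i u; set pu := wphi i u; set ev := weps i v.
have [D|D] := leqP (pu + (pb - eu)) ev.
- have -> : pb <= eu + (ev - pu) by lia.
  have -> : pu <= ev by lia.
  by case: (wf i v).
- have [E|E] := leqP pb eu.
  + have -> : pb <= eu + (ev - pu) by lia.
    have -> : pu <= ev = false by apply/negbTE; lia.
    by case: (wf i u).
  + have -> : pb <= eu + (ev - pu) = false by apply/negbTE; lia.
    by case: (cf B i b).
Qed.

Lemma conn_size (x y : words B) : conn x y -> size y = size x.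
Proof.
elim=> {x y} [x y [i e]|x|x y _ IH|x y z _ IH1 _ IH2] //.
- exact: size_we e.
- by rewrite IH2 IH1.
Qed.

End Words.



Section Img.
Variables (I : Type) (L : Type) (Bl : L -> crystal I).
Variables (A C : crystal I) (lam : L) (h : Bl lam -> A) (a : A) (m : A -> C).
Hypothesis iso : component_iso h a.
Hypothesis minj : injective m.
Hypothesis me : forall i x, omap m (ce A i x) = ce C i (m x).
Hypothesis mf : forall i x, omap m (cf A i x) = cf C i (m x).
Hypothesis meps : forall i x, ceps C i (m x) = ceps A i x.
Hypothesis mphi : forall i x, cphi C i (m x) = cphi A i x.
Hypothesis mclos : forall i z y, conn a y -> ce C i z = Some (m y) -> exists z', m z' = z.

Lemma iso_comp : component_iso (fun x => m (h x)) (m a).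
Proof.
case: iso => [hinj [he [hf [heps [hphi himg]]]]].
split; first by move=> x y /minj /hinj.
split; first by move=> i x; rewrite -me -he; case: (ce _ i x).
split; first by move=> i x; rewrite -mf -hf; case: (cf _ i x).
split; first by move=> i x; rewrite meps heps.
split; first by move=> i x; rewrite mphi hphi.
move=> y; split.
- move=> cy.
  have: clos_refl_sym_trans_1n C (fun a b => exists i, ce C i a = Some b) (m a) y.
    exact/clos_rst_rst1n_iff.
  have : exists x, m (h x) = m a.
    by have [x <-] := (himg a).1 (conn_refl _); exists x.
  move=> ex r; elim: r ex {cy} => {y} // u v z [[i e]|[i e]] _ IH [x ex]; apply: IH.
  + move: e; rewrite -ex -me -he.
    by case: (ce _ i x) => [x'|] //= [<-]; exists x'.
  + have e' : ce C i v = Some (m (h x)) by rewrite e ex.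
    have [z' ez'] := mclos (iso_conn iso x) e'.
    move: e; rewrite -ez' -ex -me.
    case E: (ce A i z') => [x''|] //= [/minj ex''].
    have cz' : conn a z'.
      apply: conn_trans (iso_conn iso x) _; apply: conn_sym.
      by apply: (@conn_edge _ _ i); rewrite E ex''.
    by have [x1 <-] := (himg z').1 cz'; exists x1.
- case=> x <-; apply: (conn_map me).
  by have := iso_conn iso x.
Qed.
End Img.

Section WordsIso.
Variables (I : Type) (theta : I -> I) (L : Type) (Bl : L -> crystal I).
Hypothesis semiBl : forall lam, seminormal (Bl lam).
Hypothesis tensBl : forall lam mu, normal_in Bl (tensor (Bl lam) (Bl mu)).
Variable (B : crystal I).
Hypothesis NB : normal_in Bl B.

Lemma HBe i (b : B) : ce B i b = None <-> ceps B i b = 0.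
Proof. have [lam [h iso]] := NB b; exact: (semi_e0 semiBl iso i (conn_refl _)). Qed.
Lemma HBf i (b : B) : cf B i b = None <-> cphi B i b = 0.
Proof. have [lam [h iso]] := NB b; exact: (semi_f0 semiBl iso i (conn_refl _)). Qed.

Lemma words_iso (w : words B) : w <> [::] -> exists lam (h : Bl lam -> words B), component_iso h w.
Proof.
elim: w => [|b w IH] // _.
have [lam1 [h1 iso1]] := NB b.
case: w IH => [|b2 w] IH.
- exists lam1; exists (fun x => [:: h1 x]).
  apply: (@iso_comp _ _ _ B (words B) lam1 h1 b (fun x => [:: x]) iso1).
  + by move=> x y [].
  + by move=> i x /=; case: (ce B i x).
  + move=> i x /=; rewrite leqn0; case: eqP => [/HBf ->|] //=.
  + by move=> i x /=; lia.
  + by move=> i x /=; lia.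
  + move=> i z y _ e; have := size_we e; case: z {e} => [|z0 [|]] //= _; by exists z0.
- have [lam2 [h2 iso2]] := IH (fun e => ltac:(discriminate e)).
  case: (iso1) => hinj1 [he1 [hf1 [heps1 [hphi1 himg1]]]].
  case: (iso2) => hinj2 [he2 [hf2 [heps2 [hphi2 himg2]]]].
  have [x1 ex1] := (himg1 b).1 (conn_refl _).
  have [x2 ex2] := (himg2 _).1 (conn_refl _).
  have [lam3 [h3 iso3]] := @tensBl lam1 lam2 (x1, x2).
  exists lam3; eexists.
  pose m (p : tensor (Bl lam1) (Bl lam2)) : words B := h1 p.1 :: h2 p.2.
  have -> : b :: b2 :: w = m (x1, x2) by rewrite /m /= ex1 ex2.
  apply: (@iso_comp _ _ _ _ (words B) lam3 h3 _ m iso3).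
  + by move=> [p1 p2] [q1 q2] [/hinj1 -> /hinj2 ->].
  + move=> i [p1 p2]; rewrite /m /=.
    rewrite hphi1; have -> : weps i (h2 p2) = ceps _ i p2 by apply: heps2.
    case: ifP => _.
    * have := he2 i p2; rewrite /= => <-; by case: (ce _ i p2).
    * rewrite -he1; by case: (ce _ i p1).
  + move=> i [p1 p2]; rewrite /m /=.
    rewrite hphi1; have -> : weps i (h2 p2) = ceps _ i p2 by apply: heps2.
    case: ifP => _.
    * have := hf2 i p2; rewrite /= => <-; by case: (cf _ i p2).
    * rewrite -hf1; by case: (cf _ i p1).
  + move=> i [p1 p2]; rewrite /m /=.
    rewrite heps1 hphi1; have -> : weps i (h2 p2) = ceps _ i p2 by apply: heps2.
    done.
  + move=> i [p1 p2]; rewrite /m /=.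
    rewrite hphi1; have -> : weps i (h2 p2) = ceps _ i p2 by apply: heps2.
    have -> : wphi i (h2 p2) = cphi _ i p2 by apply: hphi2.
    done.
  + move=> i z [p1 p2] _; rewrite /m /=.
    case: z => [|b' z'] //=; case: ifP => _.
    * case E: (we i z') => [z''|] //= [e1 e2].
      have cz : @conn _ (words B) (b2 :: w) z'.
        apply: (conn_trans _ (conn_sym (@conn_edge _ (words B) i _ _ E))).
        rewrite e2; apply/himg2; by exists p2.
      have [q2 <-] := (himg2 _).1 cz.
      by exists (p1, q2); rewrite e1.
    * case E: (ce B i b') => [b''|] //= [e1 e2].
      have cz : conn b b'.
        apply: (conn_trans _ (conn_sym (conn_edge E))).
        rewrite e1; apply/himg1; by exists p1.
      have [q1 <-] := (himg1 _).1 cz.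
      by exists (q1, p2); rewrite e2.
Qed.

End WordsIso.



Section Main.
Variables (I : Type) (theta : I -> I) (L : Type) (Bl : L -> crystal I).
Hypothesis thth : forall i, theta (theta i) = i.
Hypothesis semiBl : forall lam, seminormal (Bl lam).
Hypothesis highBl : forall lam, exists h : Bl lam, highest h /\ forall x, highest x -> x = h.
Hypothesis schBl : forall lam, exists g, forall x : Bl lam, schutz_at theta x g.
Hypothesis tensBl : forall lam mu, normal_in Bl (tensor (Bl lam) (Bl mu)).
Variable (B : crystal I).
Hypothesis NB : normal_in Bl B.

Local Notation W := (words B).
Definition PW (w : W) : Prop := w <> [::].
Local Notation X := (xi theta W).

Lemma isoPW (x : W) : PW x -> exists lam (h : Bl lam -> W), component_iso h x.
Proof. exact (@words_iso _ _ _ semiBl tensBl B NB x). Qed.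
Lemma PWconn (x y : W) : PW x -> conn x y -> PW y.
Proof. by rewrite /PW => + /conn_size; case: x; case: y. Qed.

Lemma XspecW (x : W) : PW x ->
  (forall i, omap X (wf i x) = we (theta i) (X x)) /\
  (forall i, omap X (we i x) = wf (theta i) (X x)) /\ conn x (X x).
Proof. exact: (Xspec thth semiBl highBl schBl isoPW PWconn). Qed.
Lemma XinvW (x : W) : PW x -> X (X x) = x.
Proof. exact: (Xinv thth semiBl highBl schBl isoPW PWconn). Qed.
Lemma XepsW i (x : W) : PW x -> weps i x = wphi (theta i) (X x).
Proof. exact: (X_eps thth semiBl highBl schBl isoPW PWconn). Qed.
Lemma XphiW i (x : W) : PW x -> wphi i x = weps (theta i) (X x).
Proof. exact: (X_phi thth semiBl highBl schBl isoPW PWconn). Qed.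
Lemma XagreeW (c : W) g y : PW c -> schutz_at theta c g -> conn c y -> X y = g y.
Proof. exact: (Xagree thth semiBl highBl schBl isoPW PWconn). Qed.

Lemma size_X (x : W) : PW x -> size (X x) = size x.
Proof. by move=> Px; have [_ [_ /conn_size]] := XspecW Px. Qed.
Lemma PXw (x : W) : PW x -> PW (X x).
Proof. by move=> Px; have [_ [_ H]] := XspecW Px; apply: (PWconn Px H). Qed.

Lemma wsemi1 i (x y : W) : we i x = Some y -> wf i y = Some x.
Proof.
case: x => [|b x] // e; have [lam [h iso]] := @isoPW (b :: x) (fun e => ltac:(discriminate e)).
exact (semi1 semiBl iso (conn_refl _) e).
Qed.
Lemma wsemi1' i (x y : W) : wf i y = Some x -> we i x = Some y.
Proof.
case: y => [|b y] // e; have [lam [h iso]] := @isoPW (b :: y) (fun e => ltac:(discriminate e)).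
exact (semi1' semiBl iso (conn_refl _) e).
Qed.

Lemma HBf' i (b : B) : cf B i b = None <-> cphi B i b = 0.
Proof. exact (HBf semiBl NB i b). Qed.

Lemma wf_single i (b : B) : wf i [:: b] = omap (fun b' => [:: b']) (cf B i b).
Proof.
rewrite /= leqn0; case: eqP => //= /HBf' -> //.
Qed.
Lemma we_single i (b : B) : we i [:: b] = omap (fun b' => [:: b']) (ce B i b).
Proof. by []. Qed.

Lemma P1 (b : B) : PW [:: b]. Proof. by []. Qed.
Arguments P1 : clear implicits.

Lemma X_single (b : B) : exists b', X [:: b] = [:: b'].
Proof.
have := size_X (P1 b); case: (X [:: b]) => [|b' [|]] //= _; by exists b'.
Qed.

Fixpoint rho (w : seq B) : seq B := if w is b :: w' then rho w' ++ X [:: b] else [::].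

Lemma size_rho w : size (rho w) = size w.
Proof. by elim: w => //= b w IH; rewrite size_cat IH size_X //= addn1. Qed.
Lemma rho_cat u v : rho (u ++ v) = rho v ++ rho u.
Proof. by elim: u => [|b u IH] /=; [rewrite cats0 | rewrite IH catA]. Qed.
Lemma rho_rho w : rho (rho w) = w.
Proof.
elim: w => //= b w IH; rewrite rho_cat IH.
have [b' e] := X_single b; rewrite e /= -e XinvW //.
Qed.
Lemma P_rho w : PW w -> PW (rho w).
Proof. by move=> Pw e; apply: Pw; apply/size0nil; rewrite -size_rho e. Qed.

Lemma letter_eps i (b : B) : weps (theta i) (X [:: b]) = cphi B i b.
Proof. rewrite -XphiW //=; lia. Qed.
Lemma letter_phi i (b : B) : wphi (theta i) (X [:: b]) = ceps B i b.
Proof. rewrite -XepsW //=; lia. Qed.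
Lemma letter_we i (b : B) :
  we (theta i) (X [:: b]) = omap (fun b' => X [:: b']) (cf B i b).
Proof. have [A1 _] := XspecW (P1 b); rewrite -A1 wf_single; by case: (cf B i b). Qed.
Lemma letter_wf i (b : B) :
  wf (theta i) (X [:: b]) = omap (fun b' => X [:: b']) (ce B i b).
Proof. have [_ [A2 _]] := XspecW (P1 b); rewrite -A2 we_single; by case: (ce B i b). Qed.

Lemma rho_tw w i :
  omap rho (wf i w) = we (theta i) (rho w) /\
  omap rho (we i w) = wf (theta i) (rho w) /\
  weps (theta i) (rho w) = wphi i w /\ wphi (theta i) (rho w) = weps i w.
Proof.
elim: w => [|b w [IH1 [IH2 [IH3 IH4]]]] //=.
rewrite (we_cat (HBe semiBl NB)).
rewrite wf_cat weps_cat wphi_cat IH3 IH4 letter_eps letter_phi.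
split; [|split; [|split]]; try lia.
- case: ifP => H.
  + have -> : weps i w < cphi B i b = false by apply/negbTE; lia.
    rewrite -IH1; by case: (wf i w).
  + have -> : weps i w < cphi B i b by lia.
    rewrite letter_we; by case: (cf B i b).
- case: ifP => H.
  + have -> : weps i w <= cphi B i b = false by apply/negbTE; lia.
    rewrite -IH2; by case: (we i w).
  + have -> : weps i w <= cphi B i b by lia.
    rewrite letter_wf; by case: (ce B i b).
Qed.

Lemma rho_conn (x y : W) : conn x y -> conn (rho x : W) (rho y).
Proof.
move=> cxy; apply: (@conn_map_inv _ W W rho (fun _ => True)) => // i a b _ e.
have e' : we i a = Some b := e.
have [_ [T2 _]] := rho_tw a i; rewrite e' /= in T2.
apply: conn_sym; apply: (@conn_edge _ W (theta i)); exact: wsemi1' (esym T2).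
Qed.

Lemma rhoX (w : W) : PW w -> rho (X w) = X (rho w).
Proof.
move=> Pw; pose c : W := rho w.
have Pc : PW c by apply: P_rho.
have Hg : schutz_at theta c (fun z => rho (X (rho z))).
  move=> z cz; have Pz := PWconn Pc cz; have Prz := P_rho Pz.
  have [A1 [A2 A3]] := XspecW Prz.
  split; [|split].
  - move=> i; have [T1 _] := rho_tw z i.
    rewrite /= (omap_o rho (fun y => rho (X y))) T1 (omap_o X rho) A2 thth.
    by have [T1' _] := rho_tw (X (rho z)) i.
  - move=> i; have [_ [T2 _]] := rho_tw z i.
    rewrite /= (omap_o rho (fun y => rho (X y))) T2 (omap_o X rho) A1 thth.
    by have [_ [T2' _]] := rho_tw (X (rho z)) i.
  - by have := rho_conn A3; rewrite rho_rho.
have := XagreeW Pc Hg (conn_refl _); rewrite /c rho_rho => <-.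
by [].
Qed.


Definition R (w : seq B) : seq B := X (rho w).

Lemma PR v : PW v -> PW (R v).
Proof. by move=> Pv; apply: PXw; apply: P_rho. Qed.
Lemma size_R v : PW v -> size (R v) = size v.
Proof. by move=> Pv; rewrite /R size_X ?size_rho //; apply: P_rho. Qed.
Lemma R_we i v : PW v -> we i (R v) = omap R (we i v).
Proof.
move=> Pv; have [A1 _] := XspecW (P_rho Pv).
have [_ [T2 _]] := rho_tw v i.
rewrite /R -{1}(thth i) -A1 -T2; by case: (we i v).
Qed.
Lemma R_wf i v : PW v -> wf i (R v) = omap R (wf i v).
Proof.
move=> Pv; have [_ [A2 _]] := XspecW (P_rho Pv).
have [T1 _] := rho_tw v i.
rewrite /R -{1}(thth i) -A2 -T1; by case: (wf i v).
Qed.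
Lemma R_eps i v : PW v -> weps i (R v) = weps i v.
Proof.
move=> Pv; have [_ [_ [_ T4]]] := rho_tw v i.
by rewrite /R -{1}(thth i) -XphiW ?T4 //; apply: P_rho.
Qed.
Lemma R_phi i v : PW v -> wphi i (R v) = wphi i v.
Proof.
move=> Pv; have [_ [_ [T3 _]]] := rho_tw v i.
by rewrite /R -{1}(thth i) -XepsW ?T3 //; apply: P_rho.
Qed.
Lemma R_inv v : PW v -> R (R v) = v.
Proof.
move=> Pv; rewrite /R rhoX; last by apply: P_rho.
by rewrite XinvW ?rho_rho //; apply: P_rho; apply: P_rho.
Qed.
Lemma R_single (b : B) : R [:: b] = [:: b].
Proof. by rewrite /R /= XinvW. Qed.
Lemma rhoR v : PW v -> rho (R v) = X v.
Proof. by move=> Pv; rewrite /R rhoX ?rho_rho //; apply: P_rho. Qed.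

Lemma PW_size (v : seq B) : 0 < size v -> PW v.
Proof. by case: v. Qed.

Definition Rs (a n : nat) (z : seq B) : seq B :=
  take a z ++ R (take n (drop a z)) ++ drop (a + n) z.

Lemma Rs_cat a n u v t : size u = a -> size v = n ->
  Rs a n (u ++ v ++ t) = u ++ R v ++ t.
Proof.
move=> su sv; rewrite /Rs -su take_size_cat // drop_size_cat //.
rewrite -sv take_size_cat // drop_cat ltnNge leq_addr /= su sv addKn drop_size_cat //.
Qed.

Lemma dec3 a n (z : seq B) : a + n <= size z ->
  exists u v t, [/\ z = u ++ v ++ t, size u = a & size v = n].
Proof.
move=> h; exists (take a z), (take n (drop a z)), (drop (a + n) z).
split.
- by rewrite addnC -drop_drop !cat_take_drop.
- rewrite size_take; case: ltnP => //; lia.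
- rewrite size_take size_drop; case: ltnP => //; lia.
Qed.

Lemma size_Rs a n z : 0 < n -> a + n <= size z -> size (Rs a n z) = size z.
Proof.
move=> n0 h; have [u [v [t [-> su sv]]]] := dec3 h.
rewrite Rs_cat // !size_cat size_R //; apply: PW_size; lia.
Qed.

Lemma Rs_inv a n z : 0 < n -> a + n <= size z -> Rs a n (Rs a n z) = z.
Proof.
move=> n0 h; have [u [v [t [-> su sv]]]] := dec3 h.
have Pv : PW v by apply: PW_size; lia.
by rewrite !Rs_cat ?size_R // R_inv.
Qed.

Lemma Rs_1 a z : a < size z -> Rs a 1 z = z.
Proof.
move=> h; have [u [v [t [-> su sv]]]] := @dec3 a 1 z ltac:(by rewrite addn1).
rewrite Rs_cat //; case: v sv => [|b [|]] //= _; by rewrite R_single.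
Qed.

Lemma Rs_catr a n z t : a + n <= size z -> Rs a n (z ++ t) = Rs a n z ++ t.
Proof.
move=> h; have [u [v [t' [-> su sv]]]] := dec3 h.
have -> : (u ++ v ++ t') ++ t = u ++ v ++ (t' ++ t) by rewrite -!catA.
by rewrite !Rs_cat // -!catA.
Qed.

Lemma weC i (u v : seq B) : we i (u ++ v) =
  if wphi i u < weps i v then omap (fun v' => u ++ v') (we i v)
  else omap (fun u' => u' ++ v) (we i u).
Proof. exact: (we_cat (HBe semiBl NB)). Qed.

Lemma Rs_we i a n z : 0 < n -> a + n <= size z ->
  we i (Rs a n z) = omap (Rs a n) (we i z).
Proof.
move=> n0 h; have [u [v [t [-> su sv]]]] := dec3 h.
have Pv : PW v by apply: PW_size; lia.
rewrite Rs_cat // !weC !weps_cat R_eps // R_phi // R_we //.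
case: ifP => _; [case: ifP => _|].
- case E: (we i t) => [x|] //=; by rewrite Rs_cat.
- case E: (we i v) => [x|] //=; rewrite Rs_cat //; by rewrite (size_we E).
- case E: (we i u) => [x|] //=; rewrite Rs_cat //; rewrite (size_we E) //.
Qed.

Lemma Rs_wf i a n z : 0 < n -> a + n <= size z ->
  wf i (Rs a n z) = omap (Rs a n) (wf i z).
Proof.
move=> n0 h; have [u [v [t [-> su sv]]]] := dec3 h.
have Pv : PW v by apply: PW_size; lia.
rewrite Rs_cat // !wf_cat !weps_cat R_eps // R_phi // R_wf //.
case: ifP => _; [case: ifP => _|].
- case E: (wf i t) => [x|] //=; by rewrite Rs_cat.
- case E: (wf i v) => [x|] //=; rewrite Rs_cat //; by rewrite (size_wf E).
- case E: (wf i u) => [x|] //=; rewrite Rs_cat //; rewrite (size_wf E) //.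
Qed.

Lemma X_Rs a n (c : W) : 0 < n -> a + n <= size c -> X (Rs a n c) = Rs a n (X c).
Proof.
move=> n0 hc.
have Pc : PW c by apply: PW_size; lia.
have PRs z : a + n <= size z -> PW (Rs a n z).
  by move=> hz; apply: PW_size; rewrite size_Rs //; lia.
pose g (z : W) : W := Rs a n (X (Rs a n z)).
have Hg : schutz_at theta c g.
  move=> z cz; have hz : a + n <= size z by rewrite (conn_size cz).
  have [A1 [A2 A3]] := XspecW (PRs z hz).
  have hX : a + n <= size (X (Rs a n z)) by rewrite size_X ?size_Rs //; apply: PRs.
  split; [|split].
  - move=> i; rewrite /g /= (omap_o (Rs a n) (fun y => Rs a n (X y))) -Rs_wf //.
    by rewrite (omap_o X (Rs a n)) A1 Rs_we.
  - move=> i; rewrite /g /= (omap_o (Rs a n) (fun y => Rs a n (X y))) -Rs_we //.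
    by rewrite (omap_o X (Rs a n)) A2 Rs_wf.
  - rewrite -{1}(Rs_inv n0 hz) /g.
    apply: (@conn_map_inv _ W W (Rs a n) (fun y : W => a + n <= size y)) => //.
    + move=> i x y e; have hs := size_we e; simpl in hs; split; lia.
    + move=> i x y hx e; apply: (@conn_edge _ W i).
      have e' : we i x = Some y := e; by rewrite /= Rs_we // e'.
    + by rewrite size_Rs.
have := XagreeW Pc Hg (conn_refl _); rewrite /g => ->.
have hX : a + n <= size (X (Rs a n c)) by rewrite size_X ?size_Rs //; apply: PRs.
by rewrite Rs_inv.
Qed.

Lemma Rs0_cat q x t : size x = q -> Rs 0 q (x ++ t) = R x ++ t.
Proof. by move=> sx; have := @Rs_cat 0 q [::] x t erefl sx. Qed.

Lemma cactus a n q w : 0 < n -> a + n <= q -> q <= size w ->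
  Rs 0 q (Rs a n (Rs 0 q w)) = Rs (q - a - n) n w.
Proof.
move=> n0 h hq.
have [u [x [t [-> su sx]]]] := @dec3 0 q w hq.
case: u su => // _ /=.
have [x1 [x2 [x3 [ex s1 s2]]]] := @dec3 (q - a - n) n x ltac:(lia).
subst x.
have s3 : size x3 = a by move: sx; rewrite !size_cat; lia.
have Px : PW (x1 ++ x2 ++ x3) by apply: PW_size; lia.
have Px2 : PW x2 by apply: PW_size; lia.
rewrite Rs0_cat // Rs_catr; last by rewrite size_R // sx.
rewrite /R -X_Rs ?size_rho //; last by lia.
rewrite !rho_cat -catA Rs_cat ?size_rho //.
set y := rho x3 ++ _ ++ _.
have Py : PW y by apply: PW_size; rewrite /y !size_cat !size_rho size_R ?size_rho; [lia|apply: P_rho].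
have sy : size y = q by rewrite /y !size_cat !size_rho size_R ?size_rho; [lia|apply: P_rho].
rewrite Rs0_cat ?size_X // {1}/R rhoX // XinvW; last by apply: P_rho.
rewrite /y !rho_cat !rho_rho rhoR; last by apply: P_rho.
rewrite -!catA Rs_cat //.
Qed.

Local Notation TT := (tensor W W).
Definition catp (p : TT) : W := p.1 ++ p.2.
Definition spl n (w : W) : TT := (take n w, drop n w).

Lemma catp_e i (p : TT) : omap catp (ce TT i p) = we i (catp p).
Proof.
case: p => a b; rewrite /catp /= weC; case: ifP => _.
- by case: (we i b).
- by case: (we i a).
Qed.
Lemma catp_f i (p : TT) : omap catp (cf TT i p) = wf i (catp p).
Proof.
case: p => a b; rewrite /catp /= wf_cat; case: ifP => _.
- by case: (wf i b).
- by case: (wf i a).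
Qed.
Lemma sizeTT_e i (p q : TT) : ce TT i p = Some q -> size q.1 = size p.1.
Proof.
case: p => a b /=; case: ifP => _.
- by case: (we i b) => [b'|] //= [<-].
- by case E: (we i a) => [a'|] //= [<-] /=; rewrite (size_we E).
Qed.
Lemma sizeTT_f i (p q : TT) : cf TT i p = Some q -> size q.1 = size p.1.
Proof.
case: p => a b /=; case: ifP => _.
- by case: (wf i b) => [b'|] //= [<-].
- by case E: (wf i a) => [a'|] //= [<-] /=; rewrite (size_wf E).
Qed.
Lemma spl_cat n (p : TT) : size p.1 = n -> spl n (catp p) = p.
Proof.
case: p => a b /= <-; rewrite /spl /catp /= take_size_cat // drop_size_cat //.
Qed.
Lemma catp_spl n (w : W) : catp (spl n w) = w.
Proof. exact: cat_take_drop. Qed.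
Lemma spl_e i n (w : W) : n <= size w -> ce TT i (spl n w) = omap (spl n) (we i w).
Proof.
move=> h; rewrite -{2}(catp_spl n w) -catp_e.
case E: (ce TT i (spl n w)) => [q|] //=.
rewrite spl_cat // (sizeTT_e E) /= size_take; case: ltnP => //; lia.
Qed.
Lemma spl_f i n (w : W) : n <= size w -> cf TT i (spl n w) = omap (spl n) (wf i w).
Proof.
move=> h; rewrite -{2}(catp_spl n w) -catp_f.
case E: (cf TT i (spl n w)) => [q|] //=.
rewrite spl_cat // (sizeTT_f E) /= size_take; case: ltnP => //; lia.
Qed.
Lemma connTT_size (p q : TT) : conn p q -> size q.1 = size p.1.
Proof.
elim=> {p q} [x y [i e]|x|x y _ IH|x y z _ IH1 _ IH2] //.
- exact: sizeTT_e e.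
- by rewrite IH2 IH1.
Qed.
Lemma conn_spl n (x y : W) : n <= size x -> conn x y -> conn (spl n x : TT) (spl n y).
Proof.
move=> hx cxy; apply: (@conn_map_inv _ W TT (spl n) (fun z : W => n <= size z)) => //.
- move=> i a b e; have hs := size_we e; simpl in hs; split; lia.
- move=> i a b ha e; apply: (@conn_edge _ TT i).
  have e' : we i a = Some b := e; by rewrite spl_e // e'.
Qed.
Lemma conn_catp (p q : TT) : conn p q -> conn (catp p : W) (catp q).
Proof. exact: (conn_map catp_e). Qed.

Lemma commutorE (u v : seq B) : PW u -> PW v -> commutor theta u v = X (X v ++ X u).
Proof.
move=> Pu Pv; rewrite /commutor.
set a := X v; set b := X u; set n := size a.
have Pa : PW a by apply: PXw.
have n0 : 0 < n by rewrite /n; case: (a) Pa.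
pose p0 : TT := (a, b).
have Hs : exists g, schutz_at theta p0 g.
  exists (fun p : TT => spl n (X (catp p))) => p cp.
  have sp : size p.1 = n by rewrite (connTT_size cp).
  have Pp : PW (catp p) by apply: PW_size; rewrite /catp size_cat sp; lia.
  have hn : n <= size (catp p) by rewrite /catp size_cat sp leq_addr.
  have hX : n <= size (X (catp p)) by rewrite size_X.
  have [A1 [A2 A3]] := XspecW Pp.
  split; [|split].
  - move=> i; rewrite -{1}(spl_cat sp) spl_f // spl_e //.
    rewrite -(omap_o (spl n) (fun p => spl n (X (catp p)))) -A1.
    case: (wf i (catp p)) => //= z; by rewrite catp_spl.
  - move=> i; rewrite -{1}(spl_cat sp) spl_e // spl_f //.
    rewrite -(omap_o (spl n) (fun p => spl n (X (catp p)))) -A2.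
    case: (we i (catp p)) => //= z; by rewrite catp_spl.
  - by rewrite -{1}(spl_cat sp); apply: conn_spl.
have Hg := epsilon_spec (inhabits (fun x : TT => x)) _ Hs.
set g := epsilon _ _ in Hg.
pose k (w : W) : W := catp (g (spl n w)).
have p0E : spl n (a ++ b) = p0 by apply: (@spl_cat n p0).
have Hk : schutz_at theta (a ++ b : W) k.
  move=> z cz.
  have hz : n <= size z by rewrite (conn_size cz) size_cat leq_addr.
  have cp : conn p0 (spl n z) by rewrite -p0E; apply: conn_spl => //; rewrite size_cat leq_addr.
  have [A1 [A2 A3]] := Hg _ cp.
  split; [|split].
  - move=> i; rewrite /k /= (omap_o (spl n) (fun p => catp (g p))) -spl_f //.
    by rewrite (omap_o g catp) A1 catp_e.
  - move=> i; rewrite /k /= (omap_o (spl n) (fun p => catp (g p))) -spl_e //.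
    by rewrite (omap_o g catp) A2 catp_f.
  - by rewrite -{1}(catp_spl n z); apply: conn_catp.
have := XagreeW (PW_size _) Hk (conn_refl _).
rewrite /k p0E => -> //.
by rewrite size_cat; lia.
Qed.

Lemma sigma_dec p r q (u a b t : seq B) : p.-1 <= r <= q ->
  size u = p.-1 -> size a = r - p.-1 -> size b = q - r ->
  sigma theta B p r q (u ++ a ++ b ++ t) = u ++ commutor theta a b ++ t.
Proof.
move=> /andP [h1 h2] su sa sb; rewrite /sigma -sa -sb.
have -> : q = size (u ++ a ++ b) by rewrite !size_cat su sa sb; lia.
have -> : r = size (u ++ a) by rewrite !size_cat su sa; lia.
rewrite -su take_size_cat // drop_size_cat // take_size_cat //.
have -> : take (size b) (drop (size (u ++ a)) (u ++ a ++ b ++ t)) = b.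
  by rewrite [X in drop _ X]catA drop_size_cat // take_size_cat.
by rewrite [X in drop _ X]catA [X in drop _ X]catA drop_size_cat // !size_cat addnA.
Qed.

Lemma RR_cat (a b : seq B) : PW a -> PW b -> R (R a ++ R b) = X (X b ++ X a).
Proof. by move=> Pa Pb; rewrite {1}/R rho_cat !rhoR. Qed.

Lemma sigmaRs p r q w : 0 < p -> p <= r -> r < q -> q <= size w ->
  sigma theta B p r q w = Rs p.-1 (q - p.-1) (Rs p.-1 (r - p.-1) (Rs r (q - r) w)).
Proof.
move=> p0 pr rq qw.
have [u [m [t [-> su sm]]]] := @dec3 p.-1 (q - p.-1) w ltac:(lia).
have [a [b [t' [em sa sb]]]] := @dec3 0 (r - p.-1) m ltac:(lia).
case: a sa em => // _ /= em; subst m.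
have sb' : size t' = q - r by move: sm; rewrite size_cat sb; lia.
have Pb : PW b by apply: PW_size; lia.
have Pt : PW t' by apply: PW_size; lia.
rewrite -catA sigma_dec //; last by apply/andP; lia.
rewrite commutorE //.
have -> : u ++ b ++ t' ++ t = (u ++ b) ++ t' ++ t by rewrite catA.
rewrite Rs_cat ?size_cat ?su ?sb; [|lia|exact sb'].
rewrite -catA Rs_cat // (catA (R b)) Rs_cat //; last first.
  rewrite size_cat !size_R //; lia.
by rewrite RR_cat.
Qed.

Lemma s_auxE d p (w : seq B) : 0 < p -> p + d <= size w ->
  s_aux theta d p w = Rs p.-1 d.+1 w.
Proof.
elim: d p => [|d IH] p p0 h /=.
  by rewrite Rs_1 //; lia.
rewrite IH //; last by lia.
have [u [m [t [-> su sm]]]] := @dec3 p.-1 d.+2 w ltac:(lia).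
case: m sm => [|x m] // [sm].
have -> : u ++ (x :: m) ++ t = (u ++ [:: x]) ++ m ++ t by rewrite -catA.
rewrite Rs_cat ?size_cat ?su /=; [|lia|done].
have Pm : PW m by apply: PW_size; lia.
rewrite -!catA sigma_dec //= ?size_R //; [|lia|lia|lia].
rewrite commutorE //; last exact: PR.
rewrite -[x :: m ++ t]/((x :: m) ++ t) Rs_cat //=; last by rewrite sm.
by rewrite /R XinvW //; apply: P_rho.
Qed.

Lemma sE q w : 0 < q -> q <= size w -> s theta B 1 q w = Rs 0 q w.
Proof. by move=> q0 h; rewrite /s s_auxE //= ?subn1 ?prednK //; lia. Qed.

Lemma main_i i w : 2 <= i -> i < size w ->
  T theta B i w = sigma theta B 1 1 i (sigma theta B 1 i i.+1 w).
Proof.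
move=> i2 iw.
set w' := Rs 0 i w.
have sw' : size w' = size w by rewrite /w' size_Rs //; lia.
have ew : w = Rs 0 i w' by rewrite /w' Rs_inv //; lia.
set v := Rs 0 i.+1 w'.
have sv : size v = size w by rewrite /v size_Rs //; lia.
have ev : w' = Rs 0 i.+1 v by rewrite /v Rs_inv //; lia.
rewrite (@sigmaRs 1 i i.+1 w) //; last by lia.
rewrite /= !subn0 subSnn (@Rs_1 i) //.
rewrite -/w' -/v.
rewrite (@sigmaRs 1 1 i v) //; try lia.
rewrite /= !subn0 (@Rs_1 0); last by rewrite size_Rs //=; lia.
have H1 : Rs 0 i.+1 (Rs 0 i (Rs 0 i.-1 w)) = Rs 1 (i - 1) v.
  rewrite ew.
  have -> : Rs 0 i (Rs 0 i.-1 (Rs 0 i w')) = Rs 1 (i - 1) w'.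
    rewrite cactus //; [congr Rs; lia | lia | lia | lia].
  rewrite {1}ev cactus //; [congr Rs; lia|lia|lia|lia].
rewrite /T; case: eqP => [|_]; first by lia.
case: eqP => [e2|_].
- subst i; rewrite /= !sE //=; try (rewrite ?size_Rs //=; lia).
  rewrite -H1 (@Rs_1 0); last lia.
  by rewrite {1}ew Rs_inv //; lia.
- rewrite /= !sE //; try (rewrite ?size_Rs //=; lia); try lia.
  by rewrite H1.
Qed.

Lemma main_1 w : 2 <= size w -> T theta B 1 w = sigma theta B 1 1 2 w.
Proof. by []. Qed.

End Main.


Theorem proposition6p2 (I : Type) (theta : I -> I) (L : Type)
  (Bl : L -> crystal I) (B : crystal I) (N : nat) :
  (forall i, theta (theta i) = i) ->
  kashiwara_family theta Bl ->
  normal_in Bl B ->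
  2 <= N ->
  (forall i, 2 <= i <= N.-1 -> forall w : seq B, size w = N ->
     T theta B i w = sigma theta B 1 1 i (sigma theta B 1 i i.+1 w)) /\
  (forall w : seq B, size w = N -> T theta B 1 w = sigma theta B 1 1 2 w).
Proof.
move=> thth [semiBl [_ [highBl [schBl tensBl]]]] NB N2; split.
- move=> i /andP [i2 iN] w sw.
  apply: (main_i thth semiBl highBl schBl tensBl NB); lia.
- by move=> w sw.
Qed.
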